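(* Let $n\ge2$, let $P=(p_{ij})$ be an $n\times n$ checkerboard copula and $\mathbf{p}=\mathrm{vec}(P)$. Then $$1-\mathrm{tr}(\Xi P\Xi P^\top)=1-\mathbf{p}^\top W\mathbf{p}=\mathbf{p}^\top(V\otimes V)\mathbf{p}.$$
   Context: An $n\times n$ checkerboard copula is a real $n\times n$ matrix with nonnegative entries whose row and column sums all equal $\frac1n$. $\Xi=(\xi_{ij})$ with $\xi_{ij}=1$ if $i=j$, $2$ if $i>j$, $0$ if $i<j$. $J_n$ is the $n\times n$ all-ones matrix and $V=\Xi-J_n$. $\mathrm{vec}(P)=(p_{11},p_{12},\dots,p_{1n},p_{21},\dots,p_{nn})^\top$ (row-major order). $W=\frac12(\Xi\otimes\Xi^\top+\Xi^\top\otimes\Xi)$, where $\otimes$ is the Kronecker product. *)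

(* Defs.v *)
From mathcomp Require Import all_boot all_order all_algebra.
From mathcomp Require Export mxtens.
Set Implicit Arguments. Unset Strict Implicit. Unset Printing Implicit Defensive.
Import Order.TTheory GRing.Theory Num.Theory.
Local Open Scope ring_scope.

Definition checkerboard_copula (R : numFieldType) (n : nat) (P : 'M[R]_n) : Prop :=
  (forall i j, 0 <= P i j) /\
  (forall i, \sum_(j < n) P i j = n%:R^-1) /\
  (forall j, \sum_(i < n) P i j = n%:R^-1).

Definition Xi (R : numFieldType) (n : nat) : 'M[R]_n :=
  \matrix_(i, j) (if i == j then 1 else if (j < i)%N then 2 else 0).

Definition Jn (R : numFieldType) (n : nat) : 'M[R]_n := const_mx 1.
Definition Vmx (R : numFieldType) (n : nat) : 'M[R]_n := Xi R n - Jn R n.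

(* vec(P) in row-major order: entry of index i*n + j is P i j
   (mxtens_unindex k = (k %/ n, k %% n)). Column vector. *)
Definition vecr (R : numFieldType) (n : nat) (P : 'M[R]_n) : 'cV[R]_(n * n) :=
  \col_k P (mxtens_unindex k).1 (mxtens_unindex k).2.

(* W = 1/2 (Xi (x) Xi^T + Xi^T (x) Xi), with (x) the Kronecker product tensmx
   ((A *t B) (i*p+k) (j*q+l) = A i j * B k l). *)
Definition Wmx (R : numFieldType) (n : nat) : 'M[R]_(n * n) :=
  2^-1 *: (Xi R n *t (Xi R n)^T + (Xi R n)^T *t Xi R n).

(* Main.v *)
Require Import Defs.
From mathcomp Require Import all_boot all_order all_algebra.
From mathcomp Require Import mxtens ring lra.
Import Order.TTheory GRing.Theory Num.Theory.
Local Open Scope ring_scope.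
Lemma sum_tens (R : realFieldType) n (F : 'I_(n*n) -> R) :
  \sum_k F k = \sum_i \sum_j F (mxtens_index (i, j)).
Proof.
rewrite pair_big /=.
rewrite (reindex (@mxtens_index n n)) /=; last first.
  by exists (@mxtens_unindex n n) => k _; rewrite (mxtens_indexK, mxtens_unindexK).
by apply: eq_bigr => -[i j].
Qed.
Lemma quad (R : realFieldType) n (A B P : 'M[R]_n) :
  ((vecr P)^T *m (A *t B) *m vecr P) 0 0 = \tr (A^T *m P *m B *m P^T).
Proof.
transitivity (\sum_x \sum_y (\sum_w \sum_z P w z * (A w x * B z y)) * P x y).
  rewrite !mxE sum_tens; apply: eq_bigr => x _; apply: eq_bigr => y _.
  rewrite !mxE mxtens_indexK /=; congr (_ * _).
  rewrite sum_tens; apply: eq_bigr => w _; apply: eq_bigr => z _.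
  by rewrite !mxE !mxtens_indexK.
rewrite /mxtrace; apply: eq_bigr => x _.
rewrite mxE; apply: eq_bigr => y _.
rewrite [P^T y x]mxE mxE; congr (_ * _).
rewrite exchange_big; apply: eq_bigr => z _.
rewrite mxE mulr_suml; apply: eq_bigr => w _.
by rewrite !mxE mulrCA mulrA.
Qed.

Section Main.
Variable R : realFieldType.
Variable n : nat.
Local Notation X := (Xi R n).
Local Notation J := (Jn R n).

Lemma XiXiT : X^T = 2%:R *: J - X.
Proof.
apply/matrixP => i j; rewrite !mxE -!val_eqE /=.
case: (ltngtP i j) => h.
- by rewrite mulr1 subr0.
- by rewrite mulr1 subrr.
- by rewrite mulr1 [2%:R]mulr2n addrK.
Qed.

Lemma JT : J^T = J.
Proof. by apply/matrixP => i j; rewrite !mxE. Qed.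

Lemma trJl (M : 'M[R]_n) : \tr (J *m M) = \sum_i \sum_j M i j.
Proof.
rewrite /mxtrace exchange_big; apply: eq_bigr => i _.
rewrite mxE; apply: eq_bigr => j _; by rewrite !mxE mul1r.
Qed.

Lemma sumT (M : 'M[R]_n) : \sum_i \sum_j M^T i j = \sum_i \sum_j M i j.
Proof.
rewrite exchange_big; apply: eq_bigr => i _; apply: eq_bigr => j _; by rewrite mxE.
Qed.

Lemma sumXi : \sum_i \sum_j X i j = (n * n)%:R.
Proof.
have h := sumT X; rewrite XiXiT in h.
set S := \sum_i \sum_j X i j in h *.
have e : \sum_i \sum_j (2%:R *: J - X) i j = (n * n)%:R *+ 2 - S.
  under eq_bigr => i _ do under eq_bigr => j _ do rewrite !mxE mulr1.
  under eq_bigr => i _ do rewrite sumrB.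
  rewrite sumrB !sumr_const !card_ord /S.
  under [in RHS]eq_bigr => i _ do under eq_bigr => j _ do rewrite mxE.
  by congr (_ - _); rewrite -!mulrnA mulnC.
rewrite e in h.
apply: (@mulIf _ 2%:R); first by rewrite pnatr_eq0.
rewrite -mulr_natr in h; lra.
Qed.

Lemma trJJ : \tr (J *m J) = (n * n)%:R.
Proof.
rewrite trJl; under eq_bigr => i _ do under eq_bigr => j _ do rewrite mxE.
by rewrite sumr_const card_ord sumr_const card_ord -mulrnA.
Qed.

Lemma trcyc (A B C D : 'M[R]_n) :
  \tr (A *m B *m C *m D) = \tr (D *m A *m B *m C).
Proof. by rewrite mxtrace_mulC !mulmxA. Qed.

Lemma trT (A : 'M[R]_n) : \tr A^T = \tr A.
Proof. exact: mxtrace_tr. Qed.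

Variable P : 'M[R]_n.
Hypothesis hP : checkerboard_copula P.
Local Notation c := (n%:R^-1 : R).

Lemma PJ : P *m J = c *: J.
Proof.
case: hP => _ [hr _]; apply/matrixP => i j; rewrite !mxE -(hr i) mulr1.
by apply: eq_bigr => k _; rewrite mxE mulr1.
Qed.

Lemma JP : J *m P = c *: J.
Proof.
case: hP => _ [_ hc]; apply/matrixP => i j; rewrite !mxE -(hc j) mulr1.
by apply: eq_bigr => k _; rewrite mxE mul1r.
Qed.

Lemma JPT : J *m P^T = c *: J.
Proof. by rewrite -[J in J *m _]JT -trmx_mul PJ linearZ /= JT. Qed.

Lemma PTJ : P^T *m J = c *: J.
Proof. by rewrite -[J in _ *m J]JT -trmx_mul JP linearZ /= JT. Qed.

End Main.

Theorem lemma1 (R : realFieldType) (n : nat) (P : 'M[R]_n) :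
  (2 <= n)%N -> checkerboard_copula P ->
  let p := vecr P in
  1 - \tr (Xi R n *m P *m Xi R n *m P^T) = 1 - (p^T *m Wmx R n *m p) 0 0 /\
  1 - (p^T *m Wmx R n *m p) 0 0 = (p^T *m (Vmx R n *t Vmx R n) *m p) 0 0.
Proof.
move=> hn hP p.
set X := Xi R n; set J := Jn R n.
set T := \tr (X *m P *m X *m P^T).
have eW : (p^T *m Wmx R n *m p) 0 0 = T.
  rewrite /Wmx -scalemxAr -scalemxAl mulmxDr mulmxDl mxE [in LHS]mxE.
  rewrite !quad trmxK.
  have -> : \tr (X^T *m P *m X^T *m P^T) = T.
    rewrite -trT !trmx_mul !trmxK mulmxA mulmxA trcyc /T.
    by rewrite -!mulmxA.
  rewrite -/T; field.
  by rewrite -/T; field.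
split; first by rewrite eW.
rewrite eW quad.
have VT : (Vmx R n)^T = J - X.
  rewrite /Vmx linearB /= XiXiT JT -/J -/X.
  by rewrite mulr2n scalerDl scale1r addrAC addrK.
rewrite VT /Vmx -/X -/J.
rewrite mulmxBl mulmxBr !mulmxBl !raddfB /=.
have c0 : (n%:R : R) != 0 by rewrite pnatr_eq0 -lt0n (leq_trans _ hn).
have t1 : \tr (J *m P *m X *m P^T) = n%:R^-1 * n%:R^-1 * (n * n)%:R.
  rewrite (@JP _ _ _ hP) -!scalemxAl mxtraceZ mxtrace_mulC mulmxA (@PTJ _ _ _ hP) -!scalemxAl mxtraceZ.
  by rewrite trJl sumXi mulrA.
have t2 : \tr (J *m P *m J *m P^T) = n%:R^-1 * n%:R^-1 * (n * n)%:R.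
  rewrite (@JP _ _ _ hP) -!scalemxAl mxtraceZ mxtrace_mulC mulmxA (@PTJ _ _ _ hP) -!scalemxAl mxtraceZ.
  by rewrite trJJ mulrA.
have t4 : \tr (X *m P *m J *m P^T) = n%:R^-1 * n%:R^-1 * (n * n)%:R.
  rewrite -mulmxA (@JPT _ _ _ hP) -scalemxAr mxtraceZ -mulmxA (@PJ _ _ _ hP).
  by rewrite -scalemxAr mxtraceZ mxtrace_mulC trJl sumXi mulrA.
rewrite t1 t2 t4 -/T natrM; by field.
Qed.
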